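(* Let $f_n(x)=\sum_{[\pi]\in\mathfrak{C}_{n}^o}x^{\operatorname{drop}_{oo}([\pi])}$. Then $f_1=1$ and for every $n\ge1$: (i) $f_{2n}=nf_{2n-1}-x\frac{d}{dx}f_{2n-1}+\frac{d}{dx}f_{2n-1}$; (ii) $f_{2n+1}=nxf_{2n}-x^2\frac{d}{dx}f_{2n}+x\frac{d}{dx}f_{2n}$.
   Context: For $n\ge1$, a cycle on $[n]=\{1,\dots,n\}$ is an equivalence class $[\pi]$ of permutations $\pi=\pi_1\cdots\pi_n$ of $[n]$ (in one-line notation) under cyclic rotation of the entries; the set of cycles on $[n]$ is $\mathfrak{C}_n$. Each cycle is represented by the permutation $\pi$ with $\pi_1=1$, and indices are read modulo $n$. A drop of $[\pi]$ is a consecutive pair $(\pi_i,\pi_{i+1})$, $1\le i\le n$, with $\pi_i>\pi_{i+1}$. By convention, the unique cycle $[(1)]\in\mathfrak{C}_1$ has exactly one drop $(\star,1)$, where $\star$ is considered neither even nor odd. A drop $(a,b)$ is odd-odd if $a,b$ are both odd; $\operatorname{drop}_{oo}([\pi])$ is the number of odd-odd drops of $[\pi]$. $\mathfrak{C}_n^o$ is the set of cycles $[\pi]\in\mathfrak{C}_n$ such that for every drop $(\pi_i,\pi_{i+1})$, the entry $\pi_{i+1}$ is odd. *)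

(* Defs.v *)
From mathcomp Require Import all_boot all_order all_algebra.
Set Implicit Arguments. Unset Strict Implicit. Unset Printing Implicit Defensive.
Import GRing.Theory.
Local Open Scope ring_scope.

(* A cycle on [n] = {1..n} is represented by its unique representative
   permutation pi (one-line notation, a seq nat) with pi_1 = 1. *)
Definition cycles (n : nat) : seq (seq nat) :=
  [seq s <- permutations (iota 1 n) | head 0%N s == 1%N].

(* The first component is an [option nat]; [None] stands
   for the special symbol (star), used only for the unique cycle on [1],
   whose unique drop is (star, 1) by convention. *)
Definition drops (s : seq nat) : seq (option nat * nat) :=
  if size s == 1%N then [:: (None, 1%N)]
  else [seq (Some p.1, p.2) | p <- zip s (rot 1 s) & (p.2 < p.1)%N].

Definition odd_opt (a : option nat) : bool :=
  if a is Some k then odd k else false.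

Definition is_oo_drop (d : option nat * nat) : bool := odd_opt d.1 && odd d.2.

Definition drop_oo (s : seq nat) : nat := count is_oo_drop (drops s).

Definition in_Co (s : seq nat) : bool := all (fun d => odd d.2) (drops s).

Definition f (n : nat) : {poly int} :=
  \sum_(s <- cycles n | in_Co s) 'X^(drop_oo s).

(* Main.v *)
Require Import Defs.
From mathcomp Require Import all_boot all_order all_algebra.
From mathcomp Require Import ring zify.
Import GRing.Theory.


Definition pairs (s : seq nat) := zip s (rot 1 s).
Definition ins (s : seq nat) j m := take j.+1 s ++ m :: drop j.+1 s.
Definition gC (p : nat * nat) := (p.2 < p.1) ==> odd p.2.
Definition dOO (p : nat * nat) := [&& p.2 < p.1, odd p.1 & odd p.2].

Lemma in_CoE s : size s != 1 -> in_Co s = all gC (pairs s).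
Proof.
move=> H; rewrite /in_Co /drops (negbTE H) all_map all_filter.
by apply: eq_all => -[a b].
Qed.

Lemma drop_ooE s : size s != 1 -> drop_oo s = count dOO (pairs s).
Proof.
move=> H; rewrite /drop_oo /drops (negbTE H) count_map count_filter.
by apply: eq_count => -[a b] /=; rewrite /is_oo_drop /= /dOO andbC.
Qed.

Lemma take_zip' (S T : Type) k (s : seq S) (t : seq T) :
  take k (zip s t) = zip (take k s) (take k t).
Proof. by elim: k s t => [|k IH] [|x s] [|y t] //=; rewrite IH. Qed.

Lemma drop_zip' (S T : Type) k (s : seq S) (t : seq T) :
  drop k (zip s t) = zip (drop k s) (drop k t).
Proof.
elim: k s t => [|k IH] [|x s] [|y t] //=.
- by case: (drop k t).
- by case: (drop k s).
Qed.

Lemma rot_zip (S T : Type) k (s : seq S) (t : seq T) : size s = size t ->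
  rot k (zip s t) = zip (rot k s) (rot k t).
Proof.
move=> Hs; by rewrite /rot drop_zip' take_zip' zip_cat // !size_drop Hs.
Qed.

Lemma pairs_rot k s : pairs (rot k s) = rot k (pairs s).
Proof. by rewrite /pairs rot_zip ?size_rot // rot_rot. Qed.

Lemma rot_ins s j m : j < size s -> rot j.+2 (ins s j m) = rcons (rot j.+1 s) m.
Proof.
move=> Hj; rewrite /ins -cat_rcons.
have Hsz : size (rcons (take j.+1 s) m) = j.+2 by rewrite size_rcons size_takel.
rewrite /rot.
by rewrite (drop_size_cat _ Hsz) (take_size_cat _ Hsz) -cats1 catA cats1.
Qed.

Lemma pairs_cons y u : pairs (y :: u) = rcons (zip (belast y u) u) (last y u, y).
Proof. by rewrite /pairs rot1_cons {1}lastI zip_rcons // size_belast. Qed.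

Lemma pairs_rcons y u m :
  pairs (rcons (y :: u) m) = rcons (rcons (zip (belast y u) u) (last y u, m)) (m, y).
Proof.
rewrite /pairs {2}rcons_cons rot1_cons zip_rcons; last by rewrite !size_rcons.
by rewrite {1}lastI zip_rcons // size_belast.
Qed.

Lemma ins_pairs s j m : j < size s -> exists w a b,
  [/\ nth (0,0) (pairs s) j = (a,b), perm_eq (pairs s) (rcons w (a,b))
    & perm_eq (pairs (ins s j m)) (w ++ [:: (a,m); (m,b)])].
Proof.
move=> Hj.
have Hu : size (rot j.+1 s) = size s by rewrite size_rot.
case Eu: (rot j.+1 s) Hu => [|y u] Hu; first by move: Hj; rewrite -Hu.
exists (zip (belast y u) u), (last y u), y.
have E1 : pairs (rot j.+1 s) = rcons (zip (belast y u) u) (last y u, y) by rewrite Eu pairs_cons.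
split.
- have Hp : j < size (pairs s) by rewrite /pairs size_zip size_rot minnn.
  rewrite pairs_rot in E1.
  have := congr1 (last (0,0)) E1; rewrite last_rcons => <-.
  by rewrite /rot last_cat (take_nth (0,0) Hp) last_rcons.
- by rewrite -E1 pairs_rot perm_sym perm_rot.
- rewrite -(perm_rot j.+2) -pairs_rot rot_ins // Eu pairs_rcons.
  by rewrite -!cats1 -catA.
Qed.

Set Implicit Arguments. Unset Strict Implicit.


Lemma cyclesP n t : (t \in cycles n) = perm_eq t (iota 1 n) && (head 0 t == 1).
Proof. by rewrite /cycles mem_filter mem_permutations andbC. Qed.

Lemma cycles_uniq n : uniq (cycles n).
Proof. by rewrite filter_uniq // permutations_uniq. Qed.

Lemma iotaS1 N : iota 1 N.+1 = iota 1 N ++ [:: N.+1].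
Proof. by rewrite -{1}[N.+1]addn1 iotaD. Qed.

Lemma perm_ins s j m : perm_eq (ins s j m) (m :: s).
Proof.
by rewrite /ins -[m :: drop j.+1 s]cat1s perm_catCA cat_take_drop.
Qed.

Lemma size_cycles N s : s \in cycles N -> size s = N.
Proof. by rewrite cyclesP => /andP[/perm_size -> _]; rewrite size_iota. Qed.

Lemma notin_cycles N s : s \in cycles N -> N.+1 \notin s.
Proof.
by rewrite cyclesP => /andP[/perm_mem -> _]; rewrite mem_iota ltnn andbF.
Qed.

Lemma cycles_succ N : 0 < N ->
  perm_eq (cycles N.+1) [seq ins s j N.+1 | s <- cycles N, j <- iota 0 N].
Proof.
move=> N0; apply: uniq_perm; first exact: cycles_uniq.
  apply: allpairs_uniq; [exact: cycles_uniq | exact: iota_uniq |].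
  move=> [s j] [s' j'] /allpairsP[[s1 j1] [/= Hs1 Hj1 [-> ->]]]
    /allpairsP[[s2 j2] [/= Hs2 Hj2 [-> ->]]] /= E.
  have Hj1' : j1 < size s1 by rewrite (size_cycles Hs1); move: Hj1; rewrite mem_iota.
  have Hj2' : j2 < size s2 by rewrite (size_cycles Hs2); move: Hj2; rewrite mem_iota.
  have idx : forall s0 j0, j0 < size s0 -> N.+1 \notin s0 -> index N.+1 (ins s0 j0 N.+1) = j0.+1.
    move=> s0 j0 Hj Hn; rewrite /ins index_cat.
    have -> : (N.+1 \in take j0.+1 s0) = false.
      by apply/negbTE; apply: contra Hn; apply: mem_take.
    by rewrite size_takel //= eqxx addn0.
  have Ej : j1 = j2.
    have := congr1 (index N.+1) E.
    by rewrite (idx _ _ Hj1' (notin_cycles Hs1)) (idx _ _ Hj2' (notin_cycles Hs2)) => -[].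
  subst j2; move: E; rewrite /ins => /eqP; rewrite eqseq_cat ?size_takel //.
  case/andP=> /eqP Et /eqP [Ed].
  by rewrite -(cat_take_drop j1.+1 s1) -(cat_take_drop j1.+1 s2) Et Ed.
move=> t; apply/idP/idP.
  move=> Ht; move: (Ht); rewrite cyclesP => /andP[Hp Hh].
  have Hm : N.+1 \in t by rewrite (perm_mem Hp) mem_iota /=.
  set i := index N.+1 t.
  have Hi : i < size t by rewrite index_mem.
  have Hti : nth 0 t i = N.+1 by rewrite nth_index.
  case Ei : i Hi Hti => [|j] Hi Hti.
    move: Hh Hti; case: t {Ht Hp Hm i Ei} Hi => // x t _ /= /eqP -> [E1]. by move: N0; rewrite -E1.
  apply/allpairsP; exists (take i t ++ drop i.+1 t, j); split => /=.
  - rewrite cyclesP; apply/andP; split.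
      rewrite -(perm_cons N.+1).
      have H1 : perm_eq (N.+1 :: (take i t ++ drop i.+1 t)) t.
        by rewrite -cat1s perm_catCA /= Ei -{1}Hti -drop_nth // cat_take_drop.
      apply: (perm_trans H1); apply: (perm_trans Hp).
      by rewrite iotaS1 perm_catC.
    by rewrite Ei; move: Hh; case: t {Ht Hp Hm i Ei Hi Hti}.
  - rewrite mem_iota /= add0n.
    by move: Hi; rewrite (perm_size Hp) size_iota.
  - have Hi' : i <= size t by rewrite Ei ltnW.
    rewrite /ins -Ei take_size_cat ?size_takel //.
    rewrite drop_size_cat ?size_takel //.
    by rewrite -{1}Hti Ei -drop_nth // cat_take_drop.
case/allpairsP=> [[s j] [/= Hs Hj ->]].
move: (Hs); rewrite cyclesP => /andP[Hp Hh].
rewrite cyclesP; apply/andP; split.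
  apply: perm_trans (perm_ins _ _ _) _.
  by rewrite iotaS1 perm_sym perm_catC /= perm_cons perm_sym.
by move: Hh; case: s {Hs Hp} => //= x s; rewrite /ins /=.
Qed.

Local Open Scope ring_scope.

Lemma f1 : f 1 = 1.
Proof.
rewrite /f; have -> : cycles 1 = [:: [:: 1%N]] by [].
by rewrite big_cons big_nil /= addr0 expr0.
Qed.

Lemma f2 : f 2 = 1.
Proof.
rewrite /f; have -> : cycles 2 = [:: [:: 1%N; 2%N]] by [].
by rewrite big_cons big_nil /= addr0 expr0.
Qed.

Lemma sum_split (P : seq (nat * nat)) (A D : pred (nat * nat)) k :
  subpred D A ->
  \sum_(p <- P | A p) ('X^(k - D p)%N : {poly int}) + 'X^k *+ count D P
  = 'X^k *+ count A P + 'X^(k.-1) *+ count D P.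
Proof.
move=> sDA; elim: P => [|p P IH]; first by rewrite big_nil /= !mulr0n !addr0.
rewrite big_cons /=.
have IH' := canRL (addrK _) IH.
case Dp: (D p); first rewrite (sDA _ Dp).
  rewrite IH' /= subn1 !mulrS; ring.
case: (A p); rewrite /= ?subn0 ?add0n ?mulrS IH'; ring.
Qed.

Lemma mem_pairs s p : p \in pairs s -> p.1 \in s /\ p.2 \in s.
Proof.
move=> Hp; split.
  have : p.1 \in unzip1 (pairs s) by apply: map_f.
  by rewrite /pairs unzip1_zip // size_rot.
have : p.2 \in unzip2 (pairs s) by apply: map_f.
by rewrite /pairs unzip2_zip ?size_rot // mem_rot.
Qed.

Lemma le_cycles N s x : s \in cycles N -> x \in s -> (x <= N)%N.
Proof.
rewrite cyclesP => /andP[Hp _]; rewrite (perm_mem Hp) mem_iota.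
by case/andP=> _; rewrite add1n ltnS.
Qed.

Lemma ins_facts N s j : (1 < N)%N -> s \in cycles N -> (j < N)%N ->
  in_Co (ins s j N.+1) = in_Co s && odd (nth (0,0) (pairs s) j).2 /\
  (odd (nth (0,0) (pairs s) j).2 -> drop_oo (ins s j N.+1) =
     (count dOO (pairs s) - dOO (nth (0,0) (pairs s) j) + odd N.+1)%N).
Proof.
move=> N1 Hs Hj.
have Hsz := size_cycles Hs.
have Hj' : (j < size s)%N by rewrite Hsz.
have [w [a [b [En Hp1 Hp2]]]] := ins_pairs s j N.+1 Hj'.
rewrite En /=.
have Hab : (a, b) \in pairs s by rewrite (perm_mem Hp1) mem_rcons mem_head.
have [Ha Hb] := mem_pairs Hab.
have aN := le_cycles Hs Ha; have bN := le_cycles Hs Hb.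
have szi : size (ins s j N.+1) != 1%N.
  by rewrite (perm_size (perm_ins _ _ _)) /= Hsz; apply: contraTneq N1 => -[->].
have szs : size s != 1%N by rewrite Hsz; apply: contraTneq N1 => ->.
rewrite in_CoE // in_CoE // drop_ooE // (perm_all _ Hp2) (perm_all _ Hp1).
rewrite (permP Hp2) (permP Hp1) -!cats1 !all_cat !count_cat /=.
have -> : gC (a, N.+1) by rewrite /gC /= ltnNge (leq_trans aN (leqnSn N)).
have -> : gC (N.+1, b) = odd b by rewrite /gC /= ltnS bN.
have -> : dOO (a, N.+1) = false by rewrite /dOO /= ltnNge (leq_trans aN (leqnSn N)).
have -> : dOO (N.+1, b) = odd N.+1 && odd b by rewrite /dOO /= ltnS bN.
split.
  case Ob: (odd b); rewrite ?andbT ?andbF //.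
  by rewrite /gC /= Ob implybT andbT.
move=> ->; rewrite andbT !addn0 addnK /=.
by [].
Qed.

Lemma size_pairs s : size (pairs s) = size s.
Proof. by rewrite /pairs size_zip size_rot minnn. Qed.

Lemma f_succ N : (1 < N)%N ->
  f N.+1 = 'X^(odd N.+1) * \sum_(s <- cycles N | in_Co s)
              \sum_(p <- pairs s | odd p.2) 'X^(count dOO (pairs s) - dOO p)%N.
Proof.
move=> N1.
rewrite /f big_mkcond (perm_big _ (cycles_succ (ltnW N1))) big_allpairs_dep /=.
rewrite mulr_sumr [RHS]big_mkcond; apply: eq_big_seq => s Hs /=.
have Hsz := size_cycles Hs.
rewrite (big_nth (0%N,0%N)) /index_iota subn0 size_pairs Hsz.
case: ifP => Hc.
  rewrite mulr_sumr [RHS]big_mkcond.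
  apply: eq_big_seq => j; rewrite mem_iota /= add0n => Hj.
  have [E1 E2] := ins_facts N1 Hs Hj.
  rewrite E1 Hc /=; case: ifP => // Hb.
  by rewrite E2 // exprD mulrC.
rewrite big1_seq // => j /andP[_]; rewrite mem_iota /= add0n => Hj.
have [E1 _] := ins_facts N1 Hs Hj.
by rewrite E1 Hc.
Qed.

Lemma cnt_odd N s : s \in cycles N ->
  count (fun p : nat * nat => odd p.2) (pairs s) = count odd (iota 1 N).
Proof.
rewrite cyclesP => /andP[Hp _].
have <- : count odd (unzip2 (pairs s)) = count (fun p : nat * nat => odd p.2) (pairs s).
  by rewrite count_map.
rewrite /pairs unzip2_zip ?size_rot //.
apply/permP; apply: perm_trans Hp; by rewrite perm_rot.
Qed.

Lemma odd_iota n : count odd (iota 1 n.*2) = n /\ count odd (iota 1 n.*2.+1) = n.+1.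
Proof.
elim: n => [|n [IH1 IH2]] //.
have E1 : count odd (iota 1 (n.+1).*2) = n.+1.
  by rewrite doubleS iotaS1 count_cat IH2 /= odd_double addn0 addn0.
split => //.
by rewrite iotaS1 count_cat E1 /= odd_double addn1.
Qed.

Lemma XmulXn k : ('X * ('X^(k.-1) *+ k) : {poly int}) = 'X^k *+ k.
Proof. by rewrite mulrnAr; case: k => [|k] //=; rewrite -exprS. Qed.


Lemma core N n : N != 1%N -> count odd (iota 1 N) = n ->
  \sum_(s <- cycles N | in_Co s) \sum_(p <- pairs s | odd p.2)
      ('X^(count dOO (pairs s) - dOO p)%N : {poly int})
  = n%:R * f N - 'X * (f N)^`() + (f N)^`().
Proof.
move=> N1 Hn.
rewrite /f raddf_sum !mulr_sumr -sumrB -big_split /=.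
rewrite big_seq_cond [RHS]big_seq_cond; apply: eq_bigr => s /andP[Hs Hc].
rewrite drop_ooE ?(size_cycles Hs) //.
set k := count dOO (pairs s).
have H := @sum_split (pairs s) (fun p => odd p.2) dOO k.
rewrite (cnt_odd Hs) Hn in H.
have sub : subpred dOO (fun p : nat * nat => odd p.2) by move=> [a b] /and3P[].
rewrite (canRL (addrK _) (H sub)) derivXn XmulXn mulr_natl.
by rewrite -/k addrAC.
Qed.

Theorem lemma3p1 :
  f 1 = 1 /\
  (forall n : nat, (1 <= n)%N ->
     f (2 * n) = n%:R * f (2 * n - 1) - 'X * (f (2 * n - 1))^`() + (f (2 * n - 1))^`()
  /\ f (2 * n + 1) = n%:R * 'X * f (2 * n) - 'X ^+ 2 * (f (2 * n))^`() + 'X * (f (2 * n))^`()).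
Proof.
split; first exact: f1.
move=> n Hn; split.
  have [->|n2] := eqVneq n 1%N.
    have -> : (2 * 1 - 1 = 1)%N by [].
    by rewrite f2 f1 -polyC1 derivC mul1r mulr0 subr0 addr0.
  have E : (2 * n = (2 * n - 1).+1)%N by lia.
  rewrite [in LHS]E f_succ; last by lia.
  rewrite -E oddM /= expr0 mul1r; apply: core; first by apply/eqP; lia.
  have [_ H2] := odd_iota n.-1.
  have -> : (2 * n - 1 = (n.-1).*2.+1)%N by rewrite -muln2; lia.
  by rewrite H2 prednK // ltnW.
have E : (2 * n + 1 = (2 * n).+1)%N by rewrite addn1.
rewrite E f_succ; last by lia.
have -> : odd (2 * n).+1 = true by rewrite -addn1 oddD oddM.
rewrite expr1 (core (n:=n)); last first.
  have [H1 _] := odd_iota n.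
  by rewrite mulnC muln2 H1.
  by apply/eqP; lia.
ring.
Qed.
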